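(* Let $p,m,n\ge 1$ and $T\ge 1$ be integers, let $N$ be the number of workers, and let $\mathbb{F}$ be a sufficiently large finite field. For secure distributed matrix multiplication of $A\in\mathbb{F}^{s\times t}$ and $B\in\mathbb{F}^{s\times r}$ with partitioning parameters $p,m,n$ (as described in the context), there exists a one-sided $T$-secure linear coding scheme that achieves a recovery threshold of $2R(p,m,n)+T-1$, and there exists a fully $T$-secure linear coding scheme that achieves a recovery threshold of $2R(p,m,n)+2T-1$.
   Context: Distributed matrix multiplication setting: a master wants $C=A^\intercal B$ for $A\in\mathbb{F}^{s\times t}$, $B\in\mathbb{F}^{s\times r}$, where $p\mid s$, $m\mid t$, $n\mid r$. $A$ is partitioned into a $p$-by-$m$ grid of equal-size blocks $A_{j,k}\in\mathbb{F}^{\frac{s}{p}\times\frac{t}{m}}$ and $B$ into a $p$-by-$n$ grid of blocks $B_{j,k'}\in\mathbb{F}^{\frac{s}{p}\times\frac{r}{n}}$. There are $N$ workers; worker $i$ receives coded matrices $\tilde A_i\in\mathbb{F}^{\frac{s}{p}\times\frac{t}{m}}$ and $\tilde B_i\in\mathbb{F}^{\frac{s}{p}\times\frac{r}{n}}$, computes $\tilde A_i^\intercal\tilde B_i$ and returns it to the master. A linear coding scheme: the list of blocks of $A$ is possibly padded with i.i.d. uniformly random matrices of the same block size (random keys), likewise for $B$; each $\tilde A_i$ (resp. $\tilde B_i$) is a fixed linear combination of the padded list of blocks of $A$ (resp. $B$); and the master's decoding computes linear combinations of the received results. A scheme achieves recovery threshold $K$ if the master can correctly recover $C$ from the results of any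 subset of $K$ workers. The scheme is one-sided $T$-secure if $I(\{\tilde A_i\}_{i\in\mathcal{T}};A)=0$ for every set $\mathcal{T}$ of at most $T$ workers when $A$ is uniformly random; it is fully $T$-secure if $I(\{\tilde A_i,\tilde B_i\}_{i\in\mathcal{T}};A,B)=0$ for every $|\mathcal{T}|\le T$ when $A,B$ are uniformly random. $R(p,m,n)$ denotes the bilinear complexity (tensor rank of the matrix multiplication tensor) of multiplying an $m$-by-$p$ matrix by a $p$-by-$n$ matrix. *)

(* Defs.v *)
From HB Require Import structures.
From mathcomp Require Import all_boot all_order all_algebra zify.
From Stdlib Require Rdefinitions Raxioms Rpower.
Set Implicit Arguments. Unset Strict Implicit. Unset Printing Implicit Defensive.
Import GRing.Theory.
Local Open Scope ring_scope.

(* Mutual information between two random variables defined on a finite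
   uniform probability space Omega (natural logarithm):
     I(X;Y) = E[ ln ( P(X = X w, Y = Y w) / (P(X = X w) P(Y = Y w)) ) ]. *)
Definition Rreal := Rdefinitions.R.

Definition unif_prob (Omega : finType) (E : pred Omega) : Rreal :=
  Rdefinitions.Rmult (Raxioms.INR #|E|) (Rdefinitions.Rinv (Raxioms.INR #|Omega|)).

Definition mutual_info (Omega : finType) (X Y : eqType)
    (f : Omega -> X) (g : Omega -> Y) : Rreal :=
  \big[Rdefinitions.Rplus/Rdefinitions.IZR BinNums.Z0]_(w : Omega)
    Rdefinitions.Rmult (Rdefinitions.Rinv (Raxioms.INR #|Omega|))
      (Rpower.ln
        (Rdefinitions.Rmult
          (unif_prob [pred w' | (f w' == f w) && (g w' == g w)])
          (Rdefinitions.Rinv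
            (Rdefinitions.Rmult (unif_prob [pred w' | f w' == f w])
                                (unif_prob [pred w' | g w' == g w]))))).

(* Block partitioning: a matrix with p*a rows is cut into p row-blocks of
   height a; row x of block j is row j*a + x. *)
Lemma blk_idx_proof (p a : nat) (j : 'I_p) (x : 'I_a) : (j * a + x < p * a)%N.
Proof.
have hj := ltn_ord j; have hx := ltn_ord x.
have : (j.+1 * a <= p * a)%N by rewrite leq_mul2r hj orbT.
rewrite mulSn; lia.
Qed.

Definition blk_idx (p a : nat) (j : 'I_p) (x : 'I_a) : 'I_(p * a) :=
  Ordinal (blk_idx_proof j x).

Definition blk (F : Type) (p q a b : nat) (M : 'M[F]_(p * a, q * b))
    (j : 'I_p) (k : 'I_q) : 'M[F]_(a, b) :=
  \matrix_(x < a, y < b) M (blk_idx j x) (blk_idx k y).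

(* Bilinear complexity R(p,m,n): tensor rank over F of the tensor of the
   multiplication of an m x p matrix by a p x n matrix. *)
Definition mm_decomposition (F : fieldType) (p m n r : nat) : Prop :=
  exists (U : 'I_r -> 'M[F]_(m, p)) (V : 'I_r -> 'M[F]_(p, n))
         (W : 'I_r -> 'M[F]_(m, n)),
    forall (i : 'I_m) (j : 'I_p) (j' : 'I_p) (k : 'I_n) (i' : 'I_m) (k' : 'I_n),
      ((j == j') && (i == i') && (k == k'))%:R
        = \sum_(l < r) U l i j * V l j' k * W l i' k'.

Definition is_bilinear_complexity (F : fieldType) (p m n R : nat) : Prop :=
  mm_decomposition F p m n R /\ forall r, mm_decomposition F p m n r -> (R <= r)%N.

(* The padded list of blocks of A is (A_{j,k})_{j<p,k<m} followed by
   nkA random keys; similarly for B.  Decoding: for each set S of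
   responding workers, block (k,k') of C is a fixed linear combination of
   the received results. The scheme does not depend on the block sizes. *)
Record lin_scheme (F : fieldType) (p m n N : nat) := LinScheme {
  nkA : nat;
  nkB : nat;
  encA_blk : 'I_N -> 'I_p -> 'I_m -> F;
  encA_key : 'I_N -> 'I_nkA -> F;
  encB_blk : 'I_N -> 'I_p -> 'I_n -> F;
  encB_key : 'I_N -> 'I_nkB -> F;
  dec : {set 'I_N} -> 'I_N -> 'I_m -> 'I_n -> F
}.
Arguments nkA {F p m n N} l.
Arguments nkB {F p m n N} l.
Arguments encA_blk {F p m n N} l _ _ _.
Arguments encA_key {F p m n N} l _ _.
Arguments encB_blk {F p m n N} l _ _ _.
Arguments encB_key {F p m n N} l _ _.
Arguments dec {F p m n N} l _ _ _ _.

Section Scheme.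
Variables (F : finFieldType) (p m n N : nat) (sch : lin_scheme F p m n N).

(* coded matrix \tilde A_i, for block size a x b (so s = p*a, t = m*b) *)
Definition codedA (a b : nat) (A : 'M[F]_(p * a, m * b))
    (ZA : {ffun 'I_(nkA sch) -> 'M[F]_(a, b)}) (i : 'I_N) : 'M[F]_(a, b) :=
  \sum_(j < p) \sum_(k < m) encA_blk sch i j k *: blk A j k
  + \sum_(l < nkA sch) encA_key sch i l *: ZA l.

(* coded matrix \tilde B_i, for block size a x c (so r = n*c) *)
Definition codedB (a c : nat) (B : 'M[F]_(p * a, n * c))
    (ZB : {ffun 'I_(nkB sch) -> 'M[F]_(a, c)}) (i : 'I_N) : 'M[F]_(a, c) :=
  \sum_(j < p) \sum_(k < n) encB_blk sch i j k *: blk B j k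
  + \sum_(l < nkB sch) encB_key sch i l *: ZB l.

Definition achieves_threshold (K : nat) : Prop :=
  forall S : {set 'I_N}, #|S| = K ->
  forall (a b c : nat) (A : 'M[F]_(p * a, m * b)) (B : 'M[F]_(p * a, n * c))
         (ZA : {ffun 'I_(nkA sch) -> 'M[F]_(a, b)})
         (ZB : {ffun 'I_(nkB sch) -> 'M[F]_(a, c)})
         (k : 'I_m) (k' : 'I_n),
    blk (A^T *m B) k k' =
      \sum_(i in S) dec sch S i k k' *: ((codedA A ZA i)^T *m codedB B ZB i).

Definition obsA (a b : nat) (Tc : {set 'I_N})
    (w : 'M[F]_(p * a, m * b) * {ffun 'I_(nkA sch) -> 'M[F]_(a, b)})
    : {ffun 'I_N -> 'M[F]_(a, b)} :=
  [ffun i => if i \in Tc then codedA w.1 w.2 i else 0].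

(* One-sided T-security: A and the keys uniform and independent;
   I({\tilde A_i}_{i in Tc}; A) = 0 for all |Tc| <= T. *)
Definition one_sided_secure (T : nat) : Prop :=
  forall (a b : nat) (Tc : {set 'I_N}), (#|Tc| <= T)%N ->
    @mutual_info
      ('M[F]_(p * a, m * b) * {ffun 'I_(nkA sch) -> 'M[F]_(a, b)})%type
      _ _ (obsA Tc) (fun w => w.1) = Rdefinitions.IZR BinNums.Z0.

Definition obsAB (a b c : nat) (Tc : {set 'I_N})
    (w : ('M[F]_(p * a, m * b) * 'M[F]_(p * a, n * c)) *
         ({ffun 'I_(nkA sch) -> 'M[F]_(a, b)} * {ffun 'I_(nkB sch) -> 'M[F]_(a, c)}))
    : {ffun 'I_N -> 'M[F]_(a, b) * 'M[F]_(a, c)} :=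
  [ffun i => if i \in Tc then (codedA w.1.1 w.2.1 i, codedB w.1.2 w.2.2 i)
             else (0, 0)].

(* Full T-security: A, B and all keys uniform and independent;
   I({\tilde A_i, \tilde B_i}_{i in Tc}; A, B) = 0 for all |Tc| <= T. *)
Definition fully_secure (T : nat) : Prop :=
  forall (a b c : nat) (Tc : {set 'I_N}), (#|Tc| <= T)%N ->
    @mutual_info
      (('M[F]_(p * a, m * b) * 'M[F]_(p * a, n * c)) *
         ({ffun 'I_(nkA sch) -> 'M[F]_(a, b)} * {ffun 'I_(nkB sch) -> 'M[F]_(a, c)}))%type
      _ _ (obsAB Tc) (fun w => w.1) = Rdefinitions.IZR BinNums.Z0.

End Scheme.

(* Main.v *)
Require Import Defs.
From HB Require Import structures.
From mathcomp Require Import all_boot all_order all_algebra zify.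
From Stdlib Require Reals Lra.
Set Implicit Arguments. Unset Strict Implicit. Unset Printing Implicit Defensive.

Module MI.
Import Stdlib.Reals.Reals Stdlib.micromega.Lra.
Lemma count_const (X Z : finType) (Y : eqType) (f : X * Z -> Y) o x x' :
  (exists sg : Z -> Z, injective sg /\ forall z, f (x, sg z) = f (x', z)) ->
  #|[pred z | f (x, z) == o]| = #|[pred z | f (x', z) == o]|.
Proof.
case=> sg [inj H].
rewrite -!sum1_card (reindex_inj inj) /=.
by apply: eq_bigl => z; rewrite !inE H.
Qed.

Lemma card_pair (X Z : finType) (P : pred (X * Z)) :
  #|[pred w | P w]| = (\sum_x #|[pred z | P (x, z)]|)%N.
Proof.
rewrite -sum1_card.
rewrite (eq_bigr (fun x => \sum_(z | P (x, z)) 1)%N); last by move=> x _; rewrite -sum1_card.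
rewrite pair_big_dep /=; apply: eq_bigl => -[a b] //.
Qed.

Lemma mi_zero (X Z : finType) (Y : eqType) (f : X * Z -> Y) :
  (forall x x', exists sg : Z -> Z, injective sg /\ forall z, f (x, sg z) = f (x', z)) ->
  @mutual_info _ _ _ f (fun w => w.1) = 0%R.
Proof.
move=> Hs; rewrite /mutual_info.
apply: (big_rec (fun r => r = 0%R)) => // -[x0 z0] r _ ->.
set o := f (x0, z0).
set c := #|[pred z | f (x0, z) == o]|.
have E1 : #|[pred w' : X * Z | (f w' == o) && (w'.1 == (x0, z0).1)]| = c.
  rewrite card_pair (bigD1 x0) //= big1 ?addn0.
    by apply: eq_card => z; rewrite !inE eqxx andbT.
  move=> x /negbTE xn; apply: eq_card0 => z.
  by rewrite !inE xn andbF.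
have E2 : #|[pred w' : X * Z | f w' == o]| = (#|X| * c)%N.
  rewrite card_pair -sum1_card big_distrl /=; apply: eq_bigr => x _.
  by rewrite mul1n; apply: count_const.
have E3 : #|[pred w' : X * Z | w'.1 == (x0, z0).1]| = #|Z|.
  rewrite card_pair (bigD1 x0) //= big1 ?addn0.
    by apply: eq_card => z; rewrite !inE eqxx.
  move=> x /negbTE xn; apply: eq_card0 => z.
  by rewrite !inE xn.
have cpos : (0 < c)%N by apply/card_gt0P; exists z0; rewrite inE.
have Xpos : (0 < #|X|)%N by apply/card_gt0P; exists x0.
have Zpos : (0 < #|Z|)%N by apply/card_gt0P; exists z0.
rewrite /unif_prob.
rewrite (eq_card (B := [pred w' : X * Z | (f w' == o) && (w'.1 == (x0, z0).1)])) //.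
rewrite E1.
rewrite E2 E3 card_prod !mult_INR.
have hc : (0 < INR c)%R by apply: lt_0_INR; apply/ltP.
have hX : (0 < INR #|X|)%R by apply: lt_0_INR; apply/ltP.
have hZ : (0 < INR #|Z|)%R by apply: lt_0_INR; apply/ltP.
have -> : (INR c * / (INR #|X| * INR #|Z|) *
      / (INR #|X| * INR c * / (INR #|X| * INR #|Z|) *
         (INR #|Z| * / (INR #|X| * INR #|Z|))))%R = 1%R.
  field; repeat split; lra.
by rewrite ln_1 Rmult_0_r Rplus_0_r.
Qed.
End MI.
Import GRing.Theory.
Local Open Scope ring_scope.
Section Lag.
Variable F : fieldType.

Definition lag (I : finType) (S : {set I}) (al : I -> F) (i : I) : {poly F} :=
  (\prod_(j in S :\ i) (al i - al j))^-1 *: \prod_(j in S :\ i) ('X - (al j)%:P).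

Lemma lag_eval (I : finType) (S : {set I}) (al : I -> F) i k :
  {in S &, injective al} -> i \in S -> k \in S ->
  (lag S al i).[al k] = (i == k)%:R.
Proof.
move=> inj iS kS; rewrite /lag hornerZ horner_prod.
rewrite [X in _ * X](eq_bigr (fun j => al k - al j)); last by move=> j _; rewrite hornerXsubC.
case: eqP => [<-|/eqP ne].
  rewrite mulVf //; apply/prodf_neq0 => j; rewrite in_setD1 => /andP[ji jS].
  by rewrite subr_eq0; apply/eqP => /inj => /(_ iS jS) e; rewrite e eqxx in ji.
rewrite [X in _ * X](bigD1 k) /=; last by rewrite in_setD1 eq_sym ne.
by rewrite subrr mul0r mulr0.
Qed.

Lemma size_lag (I : finType) (S : {set I}) (al : I -> F) i :
  i \in S -> (size (lag S al i) <= #|S|)%N.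
Proof.
move=> iS; apply: leq_trans (size_scale_leq _ _) _.
rewrite -big_enum size_prod_XsubC -cardE (cardsD1 i S) iS.
by [].
Qed.

Lemma size_le_sum (I : Type) (r : seq I) (P : pred I) (G : I -> {poly F}) k :
  (forall i, P i -> (size (G i) <= k)%N) -> (size (\sum_(i <- r | P i) G i)%R <= k)%N.
Proof.
move=> H; apply: (big_ind (fun q : {poly F} => size q <= k)%N) => //.
  by rewrite size_poly0.
by move=> x y hx hy; apply: leq_trans (size_add _ _) _; rewrite geq_max hx.
Qed.

Lemma interp (I : finType) (S : {set I}) (al : I -> F) (q : {poly F}) y :
  {in S &, injective al} -> (size q <= #|S|)%N ->
  q.[y] = \sum_(i in S) q.[al i] * (lag S al i).[y].
Proof.
move=> inj sq.
pose D := q - \sum_(i in S) q.[al i] *: lag S al i.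
suff D0 : D = 0.
  have := congr1 (horner^~ y) D0; rewrite /D hornerD hornerN horner_sum horner0.
  by move/eqP; rewrite subr_eq0 => /eqP ->; apply: eq_bigr => i _; rewrite hornerZ.
apply/eqP; apply: contraT => nz.
have : (size [seq al i | i <- enum S] < size D)%N.
  apply: max_poly_roots nz _ _.
    apply/allP => x /mapP[k]; rewrite mem_enum => kS ->.
    rewrite /root /D hornerD hornerN horner_sum (bigD1 k) //= big1.
      by rewrite hornerZ lag_eval // eqxx mulr1 addr0 subrr.
    by move=> i /andP[iS ik]; rewrite hornerZ lag_eval // (negbTE ik) mulr0.
  rewrite map_inj_in_uniq ?enum_uniq // => x z; rewrite !mem_enum; exact: inj.
rewrite size_map -cardE => h; suff: (size D <= #|S|)%N by rewrite leqNgt h.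
apply: leq_trans (size_add _ _) _; rewrite geq_max sq size_opp /=.
apply: size_le_sum => i iS; apply: leq_trans (size_scale_leq _ _) _.
exact: size_lag.
Qed.

End Lag.
Lemma blk_idx_inj (p a : nat) : injective (fun u : 'I_p * 'I_a => blk_idx u.1 u.2).
Proof.
move=> [j x] [j' x'] /= /(congr1 val) /= e.
have a0 : (0 < a)%N by case: a x {e x'} => [[]|].
have hx := ltn_ord x; have hx' := ltn_ord x'.
have e1 := congr1 (divn^~ a) e; rewrite /= !divnMDl // !divn_small // !addn0 in e1.
have e2 := congr1 (modn^~ a) e; rewrite /= !modnMDl !modn_small // in e2.
by congr pair; apply: val_inj.
Qed.

Lemma sum_split (V : nmodType) (p a : nat) (G : 'I_(p * a) -> V) :
  \sum_(r < p * a) G r = \sum_(j < p) \sum_(x < a) G (blk_idx j x).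
Proof.
rewrite pair_big /=.
have bij : bijective (fun u : 'I_p * 'I_a => blk_idx u.1 u.2).
  by apply: inj_card_bij (@blk_idx_inj p a) _; rewrite card_prod !card_ord.
by rewrite (reindex _ (onW_bij _ bij)).
Qed.

Lemma blk_mul (F : fieldType) (p m n a b c : nat)
  (A : 'M[F]_(p * a, m * b)) (B : 'M[F]_(p * a, n * c)) k k' :
  blk (A^T *m B) k k' = \sum_(j < p) (blk A j k)^T *m blk B j k'.
Proof.
apply/matrixP => x y; rewrite /blk !mxE summxE sum_split.
by apply: eq_bigr => j _; rewrite !mxE; apply: eq_bigr => z _; rewrite !mxE.
Qed.

Section Constr.
Variables (F : finFieldType) (p m n N R T : nat).
Variables (al : 'I_N -> F) (be : 'I_R -> F).
Hypothesis al_inj : injective al.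
Hypothesis be_inj : injective be.
Hypothesis disj : forall i l, al i != be l.
Variables (U : 'I_R -> 'M[F]_(m, p)) (V : 'I_R -> 'M[F]_(p, n)) (W : 'I_R -> 'M[F]_(m, n)).
Hypothesis dec_ok : forall (i : 'I_m) (j : 'I_p) (j' : 'I_p) (k : 'I_n) (i' : 'I_m) (k' : 'I_n),
  ((j == j') && (i == i') && (k == k'))%:R
        = \sum_(l < R) U l i j * V l j' k * W l i' k'.

Definition Lb (l : 'I_R) : {poly F} := lag setT be l.
Definition Pb : {poly F} := \prod_(l < R) ('X - (be l)%:P).

Lemma Lb_be l l' : (Lb l).[be l'] = (l == l')%:R.
Proof. by rewrite /Lb lag_eval // => x y _ _; apply: be_inj. Qed.

Lemma Pb_be l : Pb.[be l] = 0.
Proof.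
by rewrite /Pb horner_prod (bigD1 l) //= hornerXsubC subrr mul0r.
Qed.

Lemma Pb_al i : Pb.[al i] != 0.
Proof.
rewrite /Pb horner_prod; apply/prodf_neq0 => l _.
by rewrite hornerXsubC subr_eq0 disj.
Qed.

Lemma size_Lb l : (size (Lb l) <= R)%N.
Proof. by have := @size_lag F _ setT be l (in_setT l); rewrite cardsT card_ord. Qed.

Lemma size_Pb : size Pb = R.+1.
Proof. by rewrite /Pb -big_enum size_prod_XsubC -cardE card_ord. Qed.

Section Ev.
Variables (a b K : nat).

Definition ev (M : 'I_R -> 'M[F]_(a, b)) (Z : 'I_K -> 'M[F]_(a, b)) (x : F) : 'M[F]_(a, b) :=
  \sum_l (Lb l).[x] *: M l + Pb.[x] *: \sum_(t < K) x ^+ t *: Z t.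

Definition pol (M : 'I_R -> 'M[F]_(a, b)) (Z : 'I_K -> 'M[F]_(a, b)) u v : {poly F} :=
  \sum_l M l u v *: Lb l + Pb * \sum_(t < K) Z t u v *: 'X^t.

Lemma ev_entry M Z x u v : ev M Z x u v = (pol M Z u v).[x].
Proof.
rewrite /ev /pol !mxE summxE hornerD horner_sum hornerM horner_sum.
congr (_ + _).
  by apply: eq_bigr => l _; rewrite mxE [RHS]hornerZ mulrC.
rewrite summxE; congr (_ * _); apply: eq_bigr => t _.
by rewrite mxE hornerZ hornerXn mulrC.
Qed.

Lemma ev_be M Z l : ev M Z (be l) = M l.
Proof.
rewrite /ev Pb_be scale0r addr0 (bigD1 l) //= big1 ?addr0.
  by rewrite Lb_be eqxx scale1r.
by move=> l' h; rewrite Lb_be (negbTE h) scale0r.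
Qed.

Lemma size_pol M Z u v : (size (pol M Z u v) <= R + K)%N.
Proof.
rewrite /pol; apply: leq_trans (size_add _ _) _; rewrite geq_max; apply/andP; split.
  apply: size_le_sum => l _; apply: leq_trans (size_scale_leq _ _) _.
  by apply: leq_trans (size_Lb l) _; rewrite leq_addr.
apply: leq_trans (size_mul_leq _ _) _; rewrite size_Pb.
have : (size (\sum_(t < K) Z t u v *: 'X^t)%R <= K)%N.
  apply: size_le_sum => t _; apply: leq_trans (size_scale_leq _ _) _.
  by rewrite size_polyXn.
by rewrite addSn /=; move=> h; rewrite leq_add2l.
Qed.

End Ev.

Lemma decode (a b c K1 K2 : nat) (S : {set 'I_N})
  (M1 : 'I_R -> 'M[F]_(a, b)) (Z1 : 'I_K1 -> 'M[F]_(a, b))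
  (M2 : 'I_R -> 'M[F]_(a, c)) (Z2 : 'I_K2 -> 'M[F]_(a, c)) l :
  ((R + K1 + (R + K2)).-1 <= #|S|)%N ->
  \sum_(i in S) (lag S al i).[be l] *: ((ev M1 Z1 (al i))^T *m ev M2 Z2 (al i))
    = (M1 l)^T *m M2 l.
Proof.
move=> hS; apply/matrixP => u v.
pose H : {poly F} := \sum_w pol M1 Z1 w u * pol M2 Z2 w v.
have -> : ((M1 l)^T *m M2 l) u v = H.[be l].
  rewrite -(ev_be M1 Z1 l) -(ev_be M2 Z2 l) !mxE /H horner_sum.
  by apply: eq_bigr => w _; rewrite mxE hornerM !ev_entry.
rewrite (interp (S := S) (al := al)); last first.
- apply: leq_trans hS; apply: size_le_sum => w _.
  apply: leq_trans (size_mul_leq _ _) _.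
  by rewrite -!subn1 leq_sub2r // leq_add ?size_pol.
- by move=> x y _ _; apply: al_inj.
rewrite summxE; apply: eq_bigr => i _.
rewrite mxE mulrC /H horner_sum; congr (_ * _); rewrite !mxE.
by apply: eq_bigr => w _; rewrite mxE hornerM !ev_entry.
Qed.

Lemma keys_solve (a b : nat) (Tc : {set 'I_N}) (D : 'I_N -> 'M[F]_(a, b)) :
  (#|Tc| <= T)%N ->
  exists Z : 'I_T -> 'M[F]_(a, b), forall i, i \in Tc ->
    Pb.[al i] *: \sum_(t < T) al i ^+ t *: Z t = D i.
Proof.
move=> hT.
exists (fun t => \sum_(i in Tc) ((Pb.[al i])^-1 * (lag Tc al i)`_t) *: D i).
move=> k kT.
have -> : \sum_(t < T) al k ^+ t *: \sum_(i in Tc) ((Pb.[al i])^-1 * (lag Tc al i)`_t) *: D i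
   = \sum_(i in Tc) ((Pb.[al i])^-1 * (lag Tc al i).[al k]) *: D i.
  under eq_bigr do rewrite scaler_sumr.
  rewrite exchange_big /=; apply: eq_bigr => i iT.
  rewrite [(lag Tc al i).[al k]](horner_coef_wide _ (n := T)); last first.
    exact: leq_trans (size_lag al iT) hT.
  rewrite mulr_sumr scaler_suml; apply: eq_bigr => t _.
  by rewrite scalerA; congr (_ *: _); rewrite mulrCA; congr (_ * _); exact: mulrC.
rewrite (bigD1 k) //= big1 ?addr0.
  rewrite lag_eval // ?eqxx ?mulr1 ?scalerA ?mulfV ?scale1r //; first exact: Pb_al.
  by move=> x y _ _; apply: al_inj.
move=> i /andP[iT ik]; rewrite lag_eval //; last by move=> x y _ _; apply: al_inj.
by rewrite (negbTE ik) mulr0 scale0r.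
Qed.


Lemma shift_ok (a b : nat) (Tc : {set 'I_N}) (M M' : 'I_R -> 'M[F]_(a, b)) :
  (#|Tc| <= T)%N ->
  exists sg : {ffun 'I_T -> 'M[F]_(a, b)} -> {ffun 'I_T -> 'M[F]_(a, b)},
    injective sg /\ forall z i, i \in Tc ->
      ev M (fun t => sg z t) (al i) = ev M' (fun t => z t) (al i).
Proof.
move=> hT.
have [Z0 HZ] := keys_solve
  (fun i => \sum_l (Lb l).[al i] *: M' l - \sum_l (Lb l).[al i] *: M l) hT.
exists (fun z => [ffun t => z t + Z0 t]); split.
  move=> z1 z2 /ffunP e; apply/ffunP => t; move: (e t); rewrite !ffunE; apply: addIr.
move=> z i iT; rewrite /ev.
rewrite (eq_bigr (fun t : 'I_T => al i ^+ t *: z t + al i ^+ t *: Z0 t)); last first.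
  by move=> t _; rewrite ffunE scalerDr.
rewrite big_split scalerDr /= HZ //.
set x := \sum_l _; set y := _ *: _; set w := \sum_l _.
by rewrite addrCA [x + _]addrC subrK addrC.
Qed.

Definition sch (K2 : nat) : lin_scheme F p m n N :=
 @LinScheme F p m n N T K2
   (fun i j k => \sum_l (Lb l).[al i] * U l k j)
   (fun i t => Pb.[al i] * al i ^+ t)
   (fun i j k => \sum_l (Lb l).[al i] * V l j k)
   (fun i t => Pb.[al i] * al i ^+ t)
   (fun S i k k' => \sum_l W l k k' * (lag S al i).[be l]).

Definition Atil (a b : nat) (A : 'M[F]_(p * a, m * b)) l : 'M[F]_(a, b) :=
  \sum_j \sum_k U l k j *: blk A j k.
Definition Btil (a c : nat) (B : 'M[F]_(p * a, n * c)) l : 'M[F]_(a, c) :=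
  \sum_j \sum_k V l j k *: blk B j k.

Lemma codedA_ev K2 a b A ZA i :
  codedA (sch := sch K2) (a := a) (b := b) A ZA i = ev (Atil A) (fun t => ZA t) (al i).
Proof.
rewrite /codedA /ev /Atil /=; congr (_ + _); last first.
  by rewrite scaler_sumr; apply: eq_bigr => t _; rewrite scalerA.
under eq_bigr => j _ do under eq_bigr => k _ do rewrite scaler_suml.
under [RHS]eq_bigr => l _ do rewrite scaler_sumr.
rewrite [RHS]exchange_big; apply: eq_bigr => j _.
under [RHS]eq_bigr => l _ do rewrite scaler_sumr.
rewrite [RHS]exchange_big; apply: eq_bigr => k _.
by apply: eq_bigr => l _; rewrite scalerA.
Qed.

Lemma codedB_ev K2 a c B ZB i :
  codedB (sch := sch K2) (a := a) (c := c) B ZB i = ev (Btil B) (fun t => ZB t) (al i).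
Proof.
rewrite /codedB /ev /Btil /=; congr (_ + _); last first.
  by rewrite scaler_sumr; apply: eq_bigr => t _; rewrite scalerA.
under eq_bigr => j _ do under eq_bigr => k _ do rewrite scaler_suml.
under [RHS]eq_bigr => l _ do rewrite scaler_sumr.
rewrite [RHS]exchange_big; apply: eq_bigr => j _.
under [RHS]eq_bigr => l _ do rewrite scaler_sumr.
rewrite [RHS]exchange_big; apply: eq_bigr => k _.
by apply: eq_bigr => l _; rewrite scalerA.
Qed.


Lemma tri a b c (A : 'M[F]_(p * a, m * b)) (B : 'M[F]_(p * a, n * c)) k k' :
  \sum_l W l k k' *: ((Atil A l)^T *m Btil B l) = \sum_j (blk A j k)^T *m blk B j k'.
Proof.
set X := fun j1 k1 j2 k2 => (blk A j1 k1)^T *m blk B j2 k2.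
have E : forall l, W l k k' *: ((Atil A l)^T *m Btil B l) =
    \sum_j1 \sum_k1 \sum_j2 \sum_k2 (W l k k' * (U l k1 j1 * V l j2 k2)) *: X j1 k1 j2 k2.
  move=> l; rewrite /Atil /Btil [(\sum_j _)^T]linear_sum mulmx_suml scaler_sumr; apply: eq_bigr => j1 _.
  rewrite [X in X *m _]linear_sum mulmx_suml scaler_sumr; apply: eq_bigr => k1 _.
  rewrite linearZ /= -scalemxAl mulmx_sumr !scaler_sumr; apply: eq_bigr => j2 _.
  rewrite mulmx_sumr !scaler_sumr; apply: eq_bigr => k2 _.
  by rewrite -scalemxAr !scalerA mulrA.
have E2 : forall j1, X j1 k j1 k' = \sum_k1 \sum_j2 \sum_k2
      ((j1 == j2) && (k1 == k) && (k2 == k'))%:R *: X j1 k1 j2 k2.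
  move=> j1; rewrite (bigD1 k) //= [Y in _ + Y]big1 ?addr0; last first.
    move=> k1 /negbTE h; apply: big1 => j2 _; apply: big1 => k2 _.
    by rewrite h andbF andFb scale0r.
  rewrite (bigD1 j1) //= [Y in _ + Y]big1 ?addr0; last first.
    by move=> j2 /negbTE h; apply: big1 => k2 _; rewrite eq_sym h /= scale0r.
  rewrite (bigD1 k') //= [Y in _ + Y]big1 ?addr0; last first.
    by move=> k2 /negbTE h; rewrite h andbF scale0r.
  by rewrite !eqxx scale1r.
rewrite (eq_bigr _ (fun l _ => E l)) (eq_bigr _ (fun j _ => E2 j)).
rewrite exchange_big; apply: eq_bigr => j1 _.
rewrite exchange_big; apply: eq_bigr => k1 _.
rewrite exchange_big; apply: eq_bigr => j2 _.
rewrite exchange_big; apply: eq_bigr => k2 _.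
rewrite dec_ok scaler_suml; apply: eq_bigr => l _.
by rewrite [W l k k' * _]mulrC.
Qed.

Lemma sch_thr K2 : achieves_threshold (sch K2) (R + T + (R + K2)).-1.
Proof.
move=> S hS a b c A B ZA ZB k k'.
rewrite blk_mul -tri.
under eq_bigr => l _ do rewrite -(decode (S := S) (K1 := T) (K2 := K2) (Atil A) (fun t => ZA t) (Btil B) (fun t => ZB t) l (eq_leq (esym hS))).
under [RHS]eq_bigr => i _ do rewrite codedA_ev codedB_ev /= scaler_suml.
rewrite [RHS]exchange_big; apply: eq_bigr => l _.
rewrite scaler_sumr; apply: eq_bigr => i _.
by rewrite scalerA.
Qed.

Lemma sch_sec1 K2 : one_sided_secure (sch K2) T.
Proof.
move=> a b Tc hT; apply: MI.mi_zero => A A'.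
have [sg [inj H]] := shift_ok (Atil A) (Atil A') hT.
exists sg; split => // z; apply/ffunP => i; rewrite !ffunE /=.
by case: ifP => // iT; rewrite !codedA_ev H.
Qed.

Lemma sch_sec2 : fully_secure (sch T) T.
Proof.
move=> a b c Tc hT; apply: MI.mi_zero => -[A B] [A' B'].
have [sg [inj H]] := shift_ok (Atil A) (Atil A') hT.
have [sg' [inj' H']] := shift_ok (Btil B) (Btil B') hT.
exists (fun z => (sg z.1, sg' z.2)); split.
  by move=> [z1 z2] [z3 z4] [/inj -> /inj' ->].
move=> [z1 z2]; apply/ffunP => i; rewrite !ffunE /=.
by case: ifP => // iT; rewrite !codedA_ev !codedB_ev H ?H'.
Qed.

End Constr.

Lemma trivial_decomp (F : fieldType) (p m n : nat) :
  mm_decomposition F p m n #|{: 'I_m * 'I_p * 'I_n}|.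
Proof.
pose t l := @enum_val _ (mem {: 'I_m * 'I_p * 'I_n}) l.
exists (fun l => delta_mx (t l).1.1 (t l).1.2), (fun l => delta_mx (t l).1.2 (t l).2),
  (fun l => delta_mx (t l).1.1 (t l).2).
move=> i j j' k i' k'.
rewrite -(big_enum_val (A := {: 'I_m * 'I_p * 'I_n})
  (fun x : 'I_m * 'I_p * 'I_n => delta_mx x.1.1 x.1.2 i j * delta_mx x.1.2 x.2 j' k * delta_mx x.1.1 x.2 i' k')) /=.
rewrite (bigD1 (i, j, k)) //= [Y in _ + Y]big1 ?addr0; last first.
  move=> [[a b] c] /= ne; rewrite !mxE.
  have [ea|na] := eqVneq i a; last by rewrite ?andbF /= ?mulr0n ?mulr0 ?mul0r.
  have [eb|nb] := eqVneq j b; last by rewrite ?andbF /= ?mulr0n ?mulr0 ?mul0r.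
  have [ec|nc] := eqVneq k c; last by rewrite ?andbF /= ?mulr0n ?mulr0 ?mul0r.
  by move: ne; rewrite ea eb ec eqxx.
rewrite !mxE !eqxx /= andbT mul1r -natrM mulnb (eq_sym j') (eq_sym i') (eq_sym k').
by rewrite andbA.
Qed.

Close Scope ring_scope.

Theorem theorem1 :
  forall (p m n T N : nat), (1 <= p)%N -> (1 <= m)%N -> (1 <= n)%N -> (1 <= T)%N ->
  exists q0 : nat, forall F : finFieldType, (q0 <= #|F|)%N ->
  forall R : nat, is_bilinear_complexity F p m n R ->
    (exists sch : lin_scheme F p m n N,
        one_sided_secure sch T /\ achieves_threshold sch (2 * R + T - 1)) /\
    (exists sch : lin_scheme F p m n N,
        fully_secure sch T /\ achieves_threshold sch (2 * R + 2 * T - 1)).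
Proof.
move=> p m n T N _ _ _ _; exists (N + m * p * n)%N => F hF R [[U [V [W dok]]] hmin].
have hR : (R <= m * p * n)%N.
  by have := hmin _ (trivial_decomp F p m n); rewrite !card_prod !card_ord.
have h : (N + R <= #|F|)%N by apply: leq_trans hF; rewrite leq_add2l.
pose e (k : 'I_(N + R)) : F := enum_val (widen_ord h k).
have e_inj : injective e.
  by move=> x y /enum_val_inj /(congr1 val) /= /val_inj.
pose al (i : 'I_N) := e (lshift R i).
pose be (l : 'I_R) := e (rshift N l).
have al_inj : injective al by move=> x y /e_inj /lshift_inj.
have be_inj : injective be by move=> x y /e_inj /rshift_inj.
have disj : forall i l, al i != be l.
  move=> i l; apply/eqP => /e_inj /(congr1 val) /=.
  by have := ltn_ord i; lia.
split.
  exists (sch T al be U V W 0); split; first exact: sch_sec1.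
  have -> : (2 * R + T - 1 = (R + T + (R + 0)).-1)%N by lia.
  exact: sch_thr.
exists (sch T al be U V W T); split; first exact: sch_sec2.
have -> : (2 * R + 2 * T - 1 = (R + T + (R + T)).-1)%N by lia.
exact: sch_thr.
Qed.
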